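(* Consider a finite discounted stochastic game that is weakly acyclic (under multi-DM strict best replies). For each $i$ let $\lambda^i\in(0,1)$, $\gamma^i,\kappa^i\in(0,1)$, and let the DMs update policies by the Idealized Update Procedure with $h^i=R^{i,\lambda^i}$ for every $i$; let $A_{\bm{\gamma},\bm{\kappa}}$ be the transition matrix of the induced time-homogeneous Markov chain on $\bm{\Pi}$ and $\mu^*_{\bm{\gamma},\bm{\kappa}}$ its unique stationary distribution. Then for every $\epsilon>0$ there exists $\bar\kappa_\epsilon\in(0,1)$ such that whenever $\max\{\gamma^i,\kappa^i\}\in(0,\bar\kappa_\epsilon)$ for all $i$, \[ \mu^*_{\bm{\gamma},\bm{\kappa}}(\bm{\Pi}_{\rm eq})\ge 1-\epsilon/4 . \] Moreover, there exists $\bar m\in\mathbb{N}$, which can be chosen uniformly over all such $\bm{\gamma},\bm{\kappa}$, such that \[ \inf_{m\ge\bar m,\ \mu_0\in\mathcal{P}(\bm{\Pi})}\big(\mu_0A^m_{\bm{\gamma},\bm{\kappa}}\big)(\bm{\Pi}_{\rm eq})\ge 1-\epsilon/2 . \]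
   Context: Game setup: a finite discounted stochastic game with $N$ decision makers, finite state set $\mathbb{X}$, finite action sets $\mathbb{U}^i$, discount factors $\beta^i\in(0,1)$, costs $c^i:\mathbb{X}\times\mathbb{U}\to\mathbb{R}$, transition kernel $P(\cdot\mid x,\mathbf{u})$. $\Pi^i$ = set of maps $\mathbb{X}\to\mathbb{U}^i$, $\bm{\Pi}=\times_i\Pi^i$, $\bm{\pi}=(\pi^i,\bm{\pi}^{-i})$. $J^i_x(\bm{\pi})=E[\sum_{t\ge0}(\beta^i)^tc^i(x_t,\bm{\pi}(x_t))\mid x_0=x]$, $x_{t+1}\sim P(\cdot\mid x_t,\bm{\pi}(x_t))$. $\pi^i$ is a best reply to $\bm{\pi}^{-i}$ if $J^i_x(\pi^i,\bm{\pi}^{-i})=\min_{\sigma^i\in\Pi^i}J^i_x(\sigma^i,\bm{\pi}^{-i})$ for all $x$; $\mathrm{BR}^i(\bm{\pi}^{-i})$ is the set of such $\pi^i$. A best reply $\tilde\pi^i$ to $\bm{\pi}^{-i}$ is a strict best reply with respect to $\bm{\pi}=(\pi^i,\bm{\pi}^{-i})$ if $J^i_x(\tilde\pi^i,\bm{\pi}^{-i})<J^i_x(\pi^i,\bm{\pi}^{-i})$ for some $x$. $\bm{\Pi}_{\rm eq}=\{\bm{\pi}\in\bm{\Pi}:\pi^i\in\mathrm{BR}^i(\bm{\pi}^{-i})\ \forall i\}$. $\bm{\Pi}_{\rm opt}=\{\bm{\pi}^*:J^i_x(\bm{\pi}^* )=\inf_{\bm{\pi}}J^i_x(\bm{\pi})\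 \forall i,x\}$ (possibly empty). A sequence $\bm{\pi}_0,\bm{\pi}_1,\dots$ in $\bm{\Pi}$ is a multi-DM strict best reply path if for each $k$, $\bm{\pi}_k\ne\bm{\pi}_{k+1}$ and for every $i$ with $\pi^i_{k+1}\neq\pi^i_k$, $\pi^i_{k+1}$ is a strict best reply with respect to $\bm{\pi}_k$. The game is weakly acyclic if from every $\bm{\pi}\in\bm{\Pi}$ there is a (finite) multi-DM strict best reply path starting at $\bm{\pi}$ and ending in $\bm{\Pi}_{\rm eq}$. Inertial kernel $R^{i,\lambda}(\tilde\pi^i\mid\pi^i,B^i)$: $1$ if $\pi^i\in B^i,\tilde\pi^i=\pi^i$; $\lambda$ if $\pi^i\notin B^i,\tilde\pi^i=\pi^i$; $(1-\lambda)/|B^i|$ if $\pi^i\notin B^i,\tilde\pi^i\in B^i$; $0$ otherwise. Idealized Update Procedure: given $\bm{\pi}_k$, DMs choose independently: if $\bm{\pi}_k\in\bm{\Pi}_{\rm opt}$, $\pi^i_{k+1}\sim(1-\gamma^i)R^{i,\lambda^i}(\cdot\mid\pi^i_k,\mathrm{BR}^i(\bm{\pi}^{-i}_k))+\gamma^i\mathrm{Unif}(\Pi^i)$; otherwise $\pi^i_{k+1}\sim(1-\kappa^i)h^i(\cdot\mid\pi^i_k,\mathrm{BR}^i(\bm{\pi}^{-i}_k))+\kappa^i\mathrm{Unif}(\Pi^i)$. *)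

(* Defs.v *)
From HB Require Import structures.
From mathcomp Require Import all_boot.
From Stdlib Require Import Reals ClassicalEpsilon.
Set Implicit Arguments. Unset Strict Implicit. Unset Printing Implicit Defensive.

Local Open Scope R_scope.

Definition Rleb (a b : R) : bool := if Rle_dec a b then true else false.
Definition Rltb (a b : R) : bool := if Rlt_dec a b then true else false.

Definition rsum (T : finType) (f : T -> R) : R := \big[Rplus/0]_(t : T) f t.
Definition rsum_in (T : finType) (S : {set T}) (f : T -> R) : R :=
  \big[Rplus/0]_(t in S) f t.

Definition jact (N : nat) (U : 'I_N -> finType) : finType :=
  {dffun forall i : 'I_N, U i}.
Definition pol (N : nat) (X : finType) (U : 'I_N -> finType) (i : 'I_N) : finType :=
  {ffun X -> U i}.
Definition jpol (N : nat) (X : finType) (U : 'I_N -> finType) : finType :=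
  {dffun forall i : 'I_N, pol X U i}.

Record game (N : nat) (X : finType) (U : 'I_N -> finType) := Game {
  beta : 'I_N -> R;
  cost : 'I_N -> X -> jact U -> R;
  trans : X -> jact U -> X -> R
}.
Arguments game : clear implicits.

Definition game_ok N X U (G : game N X U) : Prop :=
  (forall i, 0 < beta G i < 1) /\
  (forall x u y, 0 <= trans G x u y) /\
  (forall x u, rsum (fun y => trans G x u y) = 1).

Definition act_of N X U (pi : jpol X U) (x : X) : jact U :=
  [ffun i : 'I_N => pi i x].

Definition upd N X U (pi : jpol X U) (i : 'I_N) (s : pol X U i) : jpol X U :=
  finfun (@dfwith _ (fun j => pol X U j) pi i s).
Arguments upd {N X U} pi i s.

(* E[c^i(x_t, pi(x_t)) | x_0 = x] under the Markov chain
   x_{t+1} ~ P(. | x_t, pi(x_t)) : computed by the t-step transition operator *)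
Fixpoint exp_cost N X U (G : game N X U) (i : 'I_N) (pi : jpol X U) (t : nat) (x : X)
  : R :=
  match t with
  | O => cost G i x (act_of pi x)
  | S t' => rsum (fun y => trans G x (act_of pi x) y * exp_cost G i pi t' y)
  end.

(* J^i_x(pi) = sum_{t>=0} beta^t E[c^i(x_t,pi(x_t)) | x_0 = x], the limit of the
   partial sums (the series always converges since beta^i in (0,1)). *)
Definition Jcost N X U (G : game N X U) (i : 'I_N) (pi : jpol X U) (x : X) : R :=
  epsilon (inhabits 0)
    (fun v => Un_cv (fun n => sum_f_R0 (fun t => beta G i ^ t * exp_cost G i pi t x) n) v).

Definition BR N X U (G : game N X U) (i : 'I_N) (pi : jpol X U) : {set pol X U i} :=
  [set s : pol X U i | [forall x : X, [forall s' : pol X U i,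
       Rleb (Jcost G i (upd pi i s) x) (Jcost G i (upd pi i s') x)]]].

Definition strict_br N X U (G : game N X U) (i : 'I_N) (pi : jpol X U) (s : pol X U i)
  : bool :=
  (s \in BR G i pi) && [exists x : X, Rltb (Jcost G i (upd pi i s) x) (Jcost G i pi x)].

Definition Peq N X U (G : game N X U) : {set jpol X U} :=
  [set pi : jpol X U | [forall i : 'I_N, pi i \in BR G i pi]].

Definition Popt N X U (G : game N X U) : {set jpol X U} :=
  [set pi : jpol X U | [forall i : 'I_N, [forall x : X, [forall pi' : jpol X U,
       Rleb (Jcost G i pi x) (Jcost G i pi' x)]]]].

Definition sbr_step N X U (G : game N X U) (pi pi' : jpol X U) : bool :=
  (pi != pi') && [forall i : 'I_N, (pi' i != pi i) ==> strict_br G pi (pi' i)].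

Definition weakly_acyclic N X U (G : game N X U) : Prop :=
  forall pi : jpol X U, exists s : seq (jpol X U),
    path (@sbr_step N X U G) pi s && (last pi s \in Peq G).

Definition Rkern N X U (i : 'I_N) (lam : R) (s : pol X U i) (B : {set pol X U i})
    (s' : pol X U i) : R :=
  if s \in B then (if s' == s then 1 else 0)
  else if s' == s then lam
  else if s' \in B then (1 - lam) / INR #|B|
  else 0.

(* transition matrix A_{gamma,kappa} of the Idealized Update Procedure with
   h^i = R^{i,lambda^i} : DMs choose independently *)
Definition Amat N X U (G : game N X U) (lam gam kap : 'I_N -> R) (pi pi' : jpol X U) : R :=
  \big[Rmult/1]_(i : 'I_N)
    (let e := if pi \in Popt G then gam i else kap i in
     (1 - e) * Rkern (lam i) (pi i) (BR G i pi) (pi' i) + e / INR #|pol X U i|).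

Definition is_distr (T : finType) (mu : T -> R) : Prop :=
  (forall t, 0 <= mu t) /\ rsum mu = 1.

Definition vmul (T : finType) (mu : T -> R) (A : T -> T -> R) : T -> R :=
  fun q => rsum (fun p => mu p * A p q).

Fixpoint vmulpow (T : finType) (mu : T -> R) (A : T -> T -> R) (m : nat) : T -> R :=
  match m with
  | O => mu
  | S m' => vmul (vmulpow mu A m') A
  end.

Definition stationary (T : finType) (A : T -> T -> R) (mu : T -> R) : Prop :=
  is_distr mu /\ (forall q, vmul mu A q = mu q).

Definition mass (T : finType) (mu : T -> R) (S : {set T}) : R := rsum_in S mu.

(* Main.v *)
From HB Require Import structures.
From mathcomp Require Import all_boot.
From Stdlib Require Import Reals Lra Lia ClassicalEpsilon FunctionalExtensionality.
Require Import Defs.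
Local Open Scope R_scope.
Lemma RplusA : associative Rplus. Proof. by move=> *; rewrite Rplus_assoc. Qed.
Lemma RmultA : associative Rmult. Proof. by move=> *; rewrite Rmult_assoc. Qed.
HB.instance Definition _ := Monoid.isComLaw.Build R 0 Rplus RplusA Rplus_comm Rplus_0_l.
HB.instance Definition _ := Monoid.isComLaw.Build R 1 Rmult RmultA Rmult_comm Rmult_1_l.
HB.instance Definition _ := Monoid.isMulLaw.Build R 0 Rmult Rmult_0_l Rmult_0_r.
HB.instance Definition _ := Monoid.isAddLaw.Build R Rmult Rplus Rmult_plus_distr_r Rmult_plus_distr_l.
Set Warnings "-redundant-canonical-projection -notation-overridden".
Lemma sum_dffun_prod (I : finType) (T : I -> finType) (F : forall i, {ffun T i -> R}) :
  \big[Rplus/0]_(f : {dffun forall i, T i}) \big[Rmult/1]_(i : I) F i (f i)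
  = \big[Rmult/1]_(i : I) \big[Rplus/0]_(t : T i) F i t.
Proof.
rewrite (eq_bigr _ (fun i _ => big_tag (fun i (t : T i) => F i t) i)).
rewrite bigA_distr_big_dep.
rewrite -(big_fprod 1 Rplus F).
rewrite (reindex (@fprod_of_dffun I T)); last exact/onW_bij/fprod_of_dffun_bij.
apply: eq_bigr => f _; apply: eq_bigr => i _; by rewrite fprodE.
Qed.

Section Gen.
Context {T : finType}.
Implicit Types f g : T -> R.

Lemma big_le (r : seq T) (P : pred T) f g : (forall t, f t <= g t) ->
  \big[Rplus/0]_(t <- r | P t) f t <= \big[Rplus/0]_(t <- r | P t) g t.
Proof. move=> H; apply: (big_ind2 Rle) => //; [lra | move=> *; lra]. Qed.

Lemma big_ge0 (r : seq T) (P : pred T) f : (forall t, 0 <= f t) ->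
  0 <= \big[Rplus/0]_(t <- r | P t) f t.
Proof. move=> H; apply: (big_ind (Rle 0)) => //; [lra | move=> *; lra]. Qed.

Lemma rsum_le f g : (forall t, f t <= g t) -> rsum f <= rsum g.
Proof. exact: big_le. Qed.

Lemma rsum_ge0 f : (forall t, 0 <= f t) -> 0 <= rsum f.
Proof. exact: big_ge0. Qed.

Lemma rsum_term f t0 : (forall t, 0 <= f t) -> f t0 <= rsum f.
Proof.
move=> H; rewrite /rsum (bigD1 t0) //=.
have := big_ge0 (index_enum T) (fun t => t != t0) _ H; lra.
Qed.

Lemma rsum_lt f g t0 : (forall t, f t <= g t) -> f t0 < g t0 -> rsum f < rsum g.
Proof.
move=> H H0; rewrite /rsum (bigD1 t0) //= [X in _ < X](bigD1 t0) //=.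
have := big_le (index_enum T) (fun t => t != t0) _ _ H; lra.
Qed.

Lemma rsum_scal c f : rsum (fun t => c * f t) = c * rsum f.
Proof. by rewrite /rsum big_distrr. Qed.

Lemma rsum_add f g : rsum (fun t => f t + g t) = rsum f + rsum g.
Proof. by rewrite /rsum big_split. Qed.

Lemma rsum_ext f g : (forall t, f t = g t) -> rsum f = rsum g.
Proof. by move=> H; apply: eq_bigr. Qed.

Lemma rsum_split (S : {set T}) f : rsum f = rsum_in S f + rsum_in (~: S) f.
Proof.
rewrite /rsum /rsum_in (bigID (fun t => t \in S)) /=; congr (_ + _).
by apply: eq_bigl => t; rewrite inE.
Qed.

Lemma rsum_in_ge0 (S : {set T}) f : (forall t, 0 <= f t) -> 0 <= rsum_in S f.
Proof. exact: big_ge0. Qed.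

Lemma rsum_in_le (S : {set T}) f g : (forall t, f t <= g t) -> rsum_in S f <= rsum_in S g.
Proof. exact: big_le. Qed.

Lemma rsum_if (S : {set T}) c : rsum (fun t => if t \in S then c else 0) = INR #|S| * c.
Proof.
rewrite /rsum -big_mkcond /= big_const.
elim: #|S| => [|n IH]; first (simpl; lra).
rewrite iterS IH S_INR; lra.
Qed.

Lemma rsum_delta (t0 : T) (f : T -> R) : rsum (fun t => if t == t0 then f t else 0) = f t0.
Proof.
rewrite /rsum (bigD1 t0) //= eqxx big1 ?Rplus_0_r // => t /negbTE ->; done.
Qed.

Lemma rsum_exch (T' : finType) (F : T -> T' -> R) :
  rsum (fun t => rsum (fun t' => F t t')) = rsum (fun t' => rsum (fun t => F t t')).
Proof. by rewrite /rsum exchange_big. Qed.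

End Gen.
Arguments rsum_le {T f g}.
Arguments rsum_ext {T f g}.

Lemma prod_le (I : finType) (a b : I -> R) : (forall i, 0 <= a i <= b i) ->
  0 <= \big[Rmult/1]_(i : I) a i <= \big[Rmult/1]_(i : I) b i.
Proof.
move=> H; apply: (big_ind2 (fun x y => 0 <= x <= y)) => //; first lra.
move=> x1 x2 y1 y2 [? ?] [? ?]; split; first nra.
apply: Rle_trans (Rmult_le_compat_r _ _ _ _ _) _ ; last apply: Rmult_le_compat_l; lra.
Qed.

Lemma prod_gt0 (I : finType) (a : I -> R) : (forall i, 0 < a i) ->
  0 < \big[Rmult/1]_(i : I) a i.
Proof. move=> H; apply: (big_ind (Rlt 0)) => //; [lra | move=> *; nra]. Qed.

Lemma prod_const (I : finType) (c : R) : \big[Rmult/1]_(i : I) c = c ^ #|I|.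
Proof. rewrite big_const; elim: #|I| => [|n IH] //; rewrite iterS IH /=. done. Qed.

Lemma Un_cv_ext (u v : nat -> R) l : (forall n, u n = v n) -> Un_cv u l -> Un_cv v l.
Proof. move=> H Hu e He; have [M HM] := Hu e He; exists M => n Hn; rewrite -H; exact: HM. Qed.
Arguments Un_cv_ext {u v l}.

Lemma Un_cv_shift (u : nat -> R) l : Un_cv u l -> Un_cv (fun n => u n.+1) l.
Proof. move=> Hu e He; have [M HM] := Hu e He; exists M => n Hn; apply: HM; lia. Qed.

Lemma Un_cv_const c : Un_cv (fun _ => c) c.
Proof. move=> e He; exists O => n _; rewrite /Rdist Rminus_diag Rabs_R0; lra. Qed.

Lemma Un_cv_bigsum (T : finType) (g : T -> nat -> R) (l : T -> R) :
  (forall t, Un_cv (g t) (l t)) ->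
  Un_cv (fun n => rsum (fun t => g t n)) (rsum l).
Proof.
move=> H; rewrite /rsum.
elim: (index_enum T) => [|t s IH].
  apply: (Un_cv_ext (u := fun _ => 0)); first by move=> n; rewrite big_nil.
  rewrite big_nil; exact: Un_cv_const.
rewrite big_cons; apply: (Un_cv_ext (u := fun n => g t n + \big[Rplus/0]_(j <- s) g j n)).
  by move=> n; rewrite big_cons.
exact: CV_plus.
Qed.

Lemma sum_minus (a b : nat -> R) n :
  sum_f_R0 (fun t => a t - b t) n = sum_f_R0 a n - sum_f_R0 b n.
Proof. elim: n => [|n IH] /=; lra. Qed.

Lemma series_conv (a : nat -> R) (b C : R) : 0 <= b < 1 -> 0 <= C ->
  (forall t, - C <= a t <= C) ->
  exists l, Un_cv (sum_f_R0 (fun t => b ^ t * a t)) l.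
Proof.
move=> Hb HC Ha.
have Hg : Un_cv (sum_f_R0 (fun t => b ^ t)) (/ (1 - b)).
  have := GP_infinite b; rewrite Rabs_pos_eq; last lra.
  move=> /(_ ltac:(lra)) H; apply: Un_cv_ext H => n.
  by apply: sum_eq => k _; rewrite Rmult_1_l.
have Hg2 : Un_cv (sum_f_R0 (fun t => 2 * C * b ^ t)) (2 * C * / (1 - b)).
  apply: (Un_cv_ext (u := fun n => 2 * C * sum_f_R0 (fun t => b ^ t) n)).
    by move=> n; rewrite scal_sum; apply: sum_eq => k _; lra.
  apply: (CV_mult (fun _ => 2 * C)); [exact: Un_cv_const | exact: Hg].
have Hg1 : Un_cv (sum_f_R0 (fun t => C * b ^ t)) (C * / (1 - b)).
  apply: (Un_cv_ext (u := fun n => C * sum_f_R0 (fun t => b ^ t) n)).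
    by move=> n; rewrite scal_sum; apply: sum_eq => k _; lra.
  apply: (CV_mult (fun _ => C)); [exact: Un_cv_const | exact: Hg].
have Hnn : forall n, 0 <= b ^ n * a n + C * b ^ n <= 2 * C * b ^ n.
  move=> n; have := Ha n; have : 0 <= b ^ n by apply: pow_le; lra.
  move=> H1 [H2 H3]; split; nra.
have [l Hl] := Rseries_CV_comp (fun t => b ^ t * a t + C * b ^ t)
   (fun t => 2 * C * b ^ t) Hnn (exist _ _ Hg2).
exists (l - C * / (1 - b)).
apply: (Un_cv_ext (u := fun n => sum_f_R0 (fun t => b ^ t * a t + C * b ^ t) n
                                 - sum_f_R0 (fun t => C * b ^ t) n)).
  move=> n; rewrite -sum_minus; apply: sum_eq => k _; lra.
exact: CV_minus.
Qed.

Lemma exists_max (T : finType) (t0 : T) (f : T -> R) : exists t, forall t', f t' <= f t.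
Proof.
suff H : forall s : seq T, exists t, forall t', t' \in s -> f t' <= f t.
  have [t Ht] := H (enum T); exists t => t'; apply: Ht; by rewrite mem_enum.
elim=> [|a s [t Ht]]; first by exists t0.
case: (Rle_lt_dec (f a) (f t)) => Hat.
  exists t => t'; rewrite inE => /orP [/eqP -> //|]; exact: Ht.
exists a => t'; rewrite inE => /orP [/eqP -> |/Ht]; lra.
Qed.

Lemma exists_min (T : finType) (t0 : T) (f : T -> R) : exists t, forall t', f t <= f t'.
Proof. have [t Ht] := @exists_max _ t0 (fun t => - f t); exists t => t'; have := Ht t'; lra. Qed.

Lemma max_lemma (X : finType) (d : X -> R) (Pm : X -> X -> R) (b : R) :
  0 < b < 1 -> (forall x y, 0 <= Pm x y) -> (forall x, rsum (Pm x) = 1) ->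
  (forall x, d x <= b * rsum (fun y => Pm x y * d y)) -> forall x, d x <= 0.
Proof.
move=> Hb HP HP1 Hd x.
have [xm Hxm] := @exists_max _ x d.
have H1 : rsum (fun y => Pm xm y * d y) <= d xm.
  apply: Rle_trans (rsum_le (g := fun y => Pm xm y * d xm) _) _.
    move=> y; apply: Rmult_le_compat_l; [exact: HP | exact: Hxm].
  rewrite /rsum -big_distrl /= -/(rsum _) HP1; lra.
have := Hd xm; have := Hxm x => H2 H3.
have : d xm <= b * d xm by apply: Rle_trans H3 _; apply: Rmult_le_compat_l; lra.
nra.
Qed.

Section MDP.
Variables (N : nat) (X : finType) (U : 'I_N -> finType) (G : game N X U).
Hypothesis HG : game_ok G.
Variable i : 'I_N.

Definition cmax := rsum (fun x => rsum (fun u : jact U => Rabs (cost G i x u))).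

Lemma cost_bound x u : - cmax <= cost G i x u <= cmax.
Proof.
have H1 := rsum_term (fun u => Rabs (cost G i x u)) u (fun _ => Rabs_pos _).
have H2 := rsum_term (fun x => rsum (fun u : jact U => Rabs (cost G i x u))) x
   (fun x => rsum_ge0 _ (fun _ => Rabs_pos _)).
have H3 := Rle_abs (cost G i x u); have H4 := Rle_abs (- cost G i x u).
rewrite Rabs_Ropp in H4; rewrite /cmax; simpl in *; lra.
Qed.

Lemma cmax_ge0 : 0 <= cmax.
Proof. apply: rsum_ge0 => x; apply: rsum_ge0 => u; exact: Rabs_pos. Qed.

Lemma exp_cost_bound rho t x : - cmax <= exp_cost G i rho t x <= cmax.
Proof.
case: HG => _ [HP HP1].
elim: t x => [|t IH] x /=; first exact: cost_bound.
split.
- apply: Rle_trans (rsum_le (f := fun y => trans G x (act_of rho x) y * - cmax) _).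
    rewrite /rsum -big_distrl /= -/(rsum _) HP1; lra.
  move=> y; apply: Rmult_le_compat_l; [exact: HP | exact: (proj1 (IH y))].
- apply: Rle_trans (rsum_le (g := fun y => trans G x (act_of rho x) y * cmax) _) _.
    move=> y; apply: Rmult_le_compat_l; [exact: HP | exact: (proj2 (IH y))].
  rewrite /rsum -big_distrl /= -/(rsum _) HP1; lra.
Qed.

Definition Spart rho n x := sum_f_R0 (fun t => beta G i ^ t * exp_cost G i rho t x) n.

Lemma J_spec rho x : Un_cv (fun n => Spart rho n x) (Jcost G i rho x).
Proof.
rewrite /Jcost; apply: epsilon_spec.
case: HG => Hb _.
apply: (@series_conv _ _ cmax); [have := Hb i; lra | exact: cmax_ge0 |].
move=> t; exact: exp_cost_bound.
Qed.

Lemma Spart_rec rho n x : Spart rho n.+1 x =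
  cost G i x (act_of rho x) + beta G i * rsum (fun y => trans G x (act_of rho x) y * Spart rho n y).
Proof.
elim: n => [|n IH].
  rewrite /Spart /= (rsum_ext (g := fun y => trans G x (act_of rho x) y * cost G i y (act_of rho y))); first ring.
  by move=> y; ring.
have -> : Spart rho n.+2 x = Spart rho n.+1 x + beta G i ^ n.+2 * exp_cost G i rho n.+2 x by [].
rewrite IH.
have -> : exp_cost G i rho n.+2 x = rsum (fun y => trans G x (act_of rho x) y * exp_cost G i rho n.+1 y) by [].
rewrite [in RHS](rsum_ext (g := fun y => trans G x (act_of rho x) y * Spart rho n y +
     beta G i ^ n.+1 * (trans G x (act_of rho x) y * exp_cost G i rho n.+1 y))); last first.
  by move=> y; rewrite [Spart _ n.+1 _]/Spart /= -/(Spart rho n y); ring.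
rewrite rsum_add rsum_scal /=; ring.
Qed.

Lemma bellman rho x : Jcost G i rho x =
  cost G i x (act_of rho x) + beta G i * rsum (fun y => trans G x (act_of rho x) y * Jcost G i rho y).
Proof.
apply: (UL_sequence (fun n => Spart rho n.+1 x)).
  exact: Un_cv_shift (J_spec rho x).
apply: (Un_cv_ext (u := fun n => cost G i x (act_of rho x) + beta G i *
   rsum (fun y => trans G x (act_of rho x) y * Spart rho n y))).
  by move=> n; rewrite Spart_rec.
apply: CV_plus; first exact: Un_cv_const.
apply: (CV_mult (fun _ => beta G i)); first exact: Un_cv_const.
apply: Un_cv_bigsum => y.
apply: (CV_mult (fun _ => trans G x (act_of rho x) y)); first exact: Un_cv_const.
exact: J_spec.
Qed.

End MDP.

Section Opt.
Variables (N : nat) (X : finType) (U : 'I_N -> finType) (G : game N X U).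
Hypothesis HG : game_ok G.
Variable i : 'I_N.
Variable pi : jpol X U.

Definition jointa (a : U i) (x : X) : jact U := act_of (upd pi i [ffun _ : X => a]) x.

Lemma act_upd (s : pol X U i) x : act_of (upd pi i s) x = jointa (s x) x.
Proof.
apply/ffunP => j; rewrite /jointa /act_of /upd !ffunE.
case: (eqVneq i j) => [<-|nij]; first by rewrite !dfwith_in ffunE.
by rewrite !dfwith_out.
Qed.

Definition V (s : pol X U i) x := Jcost G i (upd pi i s) x.
Definition Q (W : X -> R) x (a : U i) :=
  cost G i x (jointa a x) + beta G i * rsum (fun y => trans G x (jointa a x) y * W y).

Lemma V_bellman s x : V s x = Q (V s) x (s x).
Proof. by rewrite /V bellman // act_upd. Qed.

Lemma Q_diff W W' x a : Q W x a - Q W' x a =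
  beta G i * rsum (fun y => trans G x (jointa a x) y * (W y - W' y)).
Proof.
rewrite /Q.
rewrite (rsum_ext (f := fun y => trans G x (jointa a x) y * (W y - W' y))
  (g := fun y => trans G x (jointa a x) y * W y + (-1) * (trans G x (jointa a x) y * W' y))); last by move=> y; ring.
rewrite rsum_add rsum_scal; ring.
Qed.

Lemma BR_nonempty : exists s, s \in BR G i pi.
Proof.
have [Hb [HP HP1]] := HG.
have [sm Hsm] := @exists_min _ (pi i) (fun s => rsum (V s)).
pose W := V sm.
have C1 : forall x a, W x <= Q W x a.
  move=> x0 a0; case: (Rle_lt_dec (W x0) (Q W x0 a0)) => // Hlt.
  exfalso.
  pose s' : pol X U i := [ffun x => if x == x0 then a0 else sm x].
  have HW : forall x, Q W x (s' x) <= W x.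
    move=> x; rewrite /s' ffunE; case: eqP => [->|_]; first lra.
    rewrite /W [in X in _ <= X]V_bellman; lra.
  have Hd : forall x, V s' x - W x <= 0.
    apply: (@max_lemma _ _ (fun x y => trans G x (jointa (s' x) x) y) (beta G i) (Hb i) (fun x y => HP _ _ _) (fun x => HP1 _ _)).
    move=> x; rewrite -Q_diff; have := HW x; rewrite [V s' x]V_bellman; lra.
  have Hlt2 : V s' x0 < W x0.
    have E : V s' x0 - W x0 <= Q W x0 a0 - W x0.
      rewrite V_bellman.
      have -> : s' x0 = a0 by rewrite /s' ffunE eqxx.
      have := Q_diff (V s') W x0 a0.
      have : rsum (fun y => trans G x0 (jointa a0 x0) y * (V s' y - W y)) <= 0.
        apply: Rle_trans (rsum_le (g := fun _ => 0) _) _.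
          move=> y; have := Hd y; have := HP x0 (jointa a0 x0) y; nra.
        rewrite /rsum big1 //; exact: Rle_refl.
      have := Hb i; nra.
    lra.
  have := Hsm s'.
  have : rsum (V s') < rsum (V sm).
    apply: (@rsum_lt _ _ _ x0) => // x; have := Hd x; rewrite /W; lra.
  lra.
have C2 : forall s x, W x <= V s x.
  move=> s.
  have H : forall x, W x - V s x <= beta G i * rsum (fun y => trans G x (jointa (s x) x) y * (W y - V s y)).
    move=> x; have := C1 x (s x); rewrite -Q_diff [V s x]V_bellman; lra.
  move=> x; have := @max_lemma _ (fun x => W x - V s x) (fun x y => trans G x (jointa (s x) x) y) (beta G i) (Hb i) (fun x y => HP _ _ _) (fun x => HP1 _ _) H x; lra.
exists sm; rewrite inE; apply/forallP => x; apply/forallP => s'.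
rewrite /Rleb; case: Rle_dec => // H; exfalso; apply: H; exact: C2.
Qed.

End Opt.

Lemma rsum_in_le_on (T : finType) (S : {set T}) (f g : T -> R) :
  (forall t, t \in S -> f t <= g t) -> rsum_in S f <= rsum_in S g.
Proof. move=> H; apply: (big_ind2 Rle) => //; [lra | move=> *; lra]. Qed.

Lemma rsum_in_term (T : finType) (S : {set T}) (f : T -> R) t0 :
  (forall t, 0 <= f t) -> t0 \in S -> f t0 <= rsum_in S f.
Proof.
move=> H H0; rewrite /rsum_in (bigD1 t0) //=.
have : 0 <= \big[Rplus/0]_(t in S | t != t0) f t by apply: big_ge0.
lra.
Qed.

Lemma rsum_in_scal (T : finType) (S : {set T}) c (f : T -> R) :
  rsum_in S (fun t => c * f t) = c * rsum_in S f.
Proof. by rewrite /rsum_in big_distrr. Qed.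

Lemma upd_id N X U (pi : jpol X U) (i : 'I_N) : upd pi i (pi i) = pi.
Proof.
apply/ffunP => j; rewrite /upd ffunE.
by case: (eqVneq i j) => [<-|nij]; [rewrite dfwith_in | rewrite dfwith_out].
Qed.

Section Kern.
Variables (N : nat) (X : finType) (U : 'I_N -> finType) (i : 'I_N).

Lemma Rkern_ge0 (l : R) (s : pol X U i) B s' : 0 <= l <= 1 -> 0 <= Rkern l s B s'.
Proof.
move=> Hl; rewrite /Rkern.
case: (s \in B); first by case: (s' == s); lra.
case: (s' == s); first lra.
case Hs': (s' \in B); last lra.
have : (0 < #|B|)%nat by apply/card_gt0P; exists s'.
move=> /ltP /lt_0_INR H; apply: Rle_mult_inv_pos => //; lra.
Qed.

Lemma Rkern_sum (l : R) (s : pol X U i) (B : {set pol X U i}) : (exists b, b \in B) -> rsum (Rkern l s B) = 1.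
Proof.
move=> [b Hb]; rewrite /Rkern.
case Hs: (s \in B).
  exact: (rsum_delta s (fun _ => 1)).
have H0 : (0 < #|B|)%nat by apply/card_gt0P; exists b.
move/ltP/lt_0_INR: H0 => H0.
rewrite /rsum (bigD1 s) //= eqxx.
rewrite (eq_bigr (fun s' => if s' \in B then (1 - l) / INR #|B| else 0)); last first.
  by move=> s' /negbTE ->.
rewrite -big_mkcondr /=.
rewrite (eq_bigl (fun s' => s' \in B)); last first.
  move=> s'; apply/andP/idP => [[] //|Hs']; split => //.
  by apply/eqP => E; rewrite E Hs in Hs'.
rewrite big_const; have -> : forall n c, iter n (Rplus c) 0 = INR n * c.
  by elim => [|n IH] c; [simpl; lra | rewrite iterS IH S_INR; lra].
set n := INR _ in H0 *; field; lra.
Qed.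

End Kern.

Lemma iter_plus n c : iter n (Rplus c) 0 = INR n * c.
Proof. by elim: n => [|n IH]; [simpl; lra | rewrite iterS IH S_INR; lra]. Qed.

Lemma rsum_const (T : finType) c : rsum (fun _ : T => c) = INR #|T| * c.
Proof. by rewrite /rsum big_const iter_plus cardE. Qed.

Section VM.
Context {T : finType}.
Implicit Types (nu : T -> R) (A : T -> T -> R).

Definition delta (p : T) : T -> R := fun q => if q == p then 1 else 0.

Lemma vmulpow_ge0 nu A : (forall t, 0 <= nu t) -> (forall p q, 0 <= A p q) ->
  forall m q, 0 <= vmulpow nu A m q.
Proof.
move=> Hn HA; elim=> [|m IH] q //=.
apply: rsum_ge0 => p; have := IH p; have := HA p q; nra.
Qed.

Lemma vmul_sum nu A : (forall p, rsum (A p) = 1) -> rsum (vmul nu A) = rsum nu.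
Proof.
move=> H; rewrite /vmul rsum_exch; apply: rsum_ext => p.
by rewrite rsum_scal H Rmult_1_r.
Qed.

Lemma vmulpow_sum nu A : (forall p, rsum (A p) = 1) -> forall m, rsum (vmulpow nu A m) = rsum nu.
Proof. move=> H; elim=> [|m IH] //=; by rewrite vmul_sum. Qed.

Lemma vmulpow_add nu A a b : vmulpow (vmulpow nu A a) A b = vmulpow nu A (b + a).
Proof. elim: b => [|b IH] //=; by rewrite IH. Qed.

Lemma vmulpow_cmp nu A0 A c : 0 <= c -> (forall t, 0 <= nu t) -> (forall p q, 0 <= A0 p q) ->
  (forall p q, c * A0 p q <= A p q) -> forall m q, c ^ m * vmulpow nu A0 m q <= vmulpow nu A m q.
Proof.
move=> Hc Hn H0 H; elim=> [|m IH] q /=; first lra.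
rewrite /vmul -rsum_scal; apply: rsum_le => p.
have h1 := IH p; have h2 := H p q; have h3 := H0 p q; have h4 := vmulpow_ge0 nu A0 Hn H0 m p.
have h5 : 0 <= c ^ m by apply: pow_le.
have -> : c * c ^ m * (vmulpow nu A0 m p * A0 p q) = (c ^ m * vmulpow nu A0 m p) * (c * A0 p q) by ring.
apply: Rmult_le_compat => //; apply: Rmult_le_pos => //.
Qed.

Lemma vmulpow_lin nu A m q : vmulpow nu A m q = rsum (fun p => nu p * vmulpow (delta p) A m q).
Proof.
elim: m q => [|m IH] q /=.
  rewrite /rsum (bigD1 q) //= /delta eqxx big1 ?Rplus_0_r; first ring.
  by move=> p /negbTE; rewrite eq_sym => ->; ring.
rewrite /vmul (rsum_ext (g := fun r => rsum (fun p => nu p * vmulpow (delta p) A m r * A r q))); last first.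
  by move=> r; rewrite IH /rsum big_distrl.
rewrite rsum_exch; apply: rsum_ext => p; rewrite -rsum_scal; apply: rsum_ext => r; ring.
Qed.

Lemma vmulpow_stat mu A : (forall q, vmul mu A q = mu q) -> forall m, vmulpow mu A m = mu.
Proof.
move=> H; elim=> [|m IH] //=; rewrite IH; apply: functional_extensionality; exact: H.
Qed.

End VM.

Section Chain.
Variables (N : nat) (X : finType) (U : 'I_N -> finType) (G : game N X U).
Hypothesis HG : game_ok G.
Variable lam : 'I_N -> R.
Hypothesis Hlam : forall i, 0 < lam i < 1.

Definition A0 := Amat G lam (fun _ => 0) (fun _ => 0).

Lemma A0E p q : A0 p q = \big[Rmult/1]_(i : 'I_N) Rkern (lam i) (p i) (BR G i p) (q i).
Proof.
rewrite /A0 /Amat; apply: eq_bigr => i _ /=.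
case: (p \in Popt G); rewrite /Rdiv; ring.
Qed.

Lemma card_pol_gt0 (p : jpol X U) i : 0 < INR #|pol X U i|.
Proof. apply: lt_0_INR; apply/ltP; apply/card_gt0P; by exists (p i). Qed.

Definition okE (gam kap : 'I_N -> R) := forall i, 0 <= gam i <= 1 /\ 0 <= kap i <= 1.

Lemma factor_ge0 e i (p : jpol X U) s' : 0 <= e <= 1 ->
  0 <= (1 - e) * Rkern (lam i) (p i) (BR G i p) s' + e / INR #|pol X U i|.
Proof.
move=> He; have := card_pol_gt0 p i => Hc.
have := @Rkern_ge0 _ _ _ i (lam i) (p i) (BR G i p) s' ltac:(have := Hlam i; lra).
have : 0 <= e / INR #|pol X U i| by apply: Rle_mult_inv_pos; lra.
move=> *; nra.
Qed.

Lemma Amat_ge0 gam kap : okE gam kap -> forall p q, 0 <= Amat G lam gam kap p q.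
Proof.
move=> H p q; apply: (big_ind (Rle 0)); [lra | move=> *; nra |] => i _ /=.
by case: (p \in Popt G); apply: factor_ge0; case: (H i).
Qed.

Lemma Amat_sum gam kap : okE gam kap -> forall p, rsum (Amat G lam gam kap p) = 1.
Proof.
move=> H p.
pose F i := [ffun s : pol X U i => let e := if p \in Popt G then gam i else kap i in
     (1 - e) * Rkern (lam i) (p i) (BR G i p) s + e / INR #|pol X U i|].
rewrite /rsum /Amat (eq_bigr (fun q : jpol X U => \big[Rmult/1]_i F i (q i))); last first.
  by move=> q _; apply: eq_bigr => i _; rewrite /F ffunE.
rewrite sum_dffun_prod big1 // => i _.
rewrite (eq_bigr (fun s => let e := if p \in Popt G then gam i else kap i in
     (1 - e) * Rkern (lam i) (p i) (BR G i p) s + e / INR #|pol X U i|)); last first.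
  by move=> s _; rewrite /F ffunE.
have Hc := card_pol_gt0 p i.
have [b Hb] := @BR_nonempty _ _ _ G HG i p.
move: (if p \in Popt G then gam i else kap i) => e /=.
rewrite -/(rsum _) rsum_add rsum_scal Rkern_sum; last by exists b.
rewrite rsum_const; set n := INR _ in Hc *; field; lra.
Qed.

Lemma Amat_ge_A0 gam kap kb : 0 <= kb <= 1 -> (forall i, 0 <= gam i <= kb /\ 0 <= kap i <= kb) ->
  forall p q, (1 - kb) ^ N * A0 p q <= Amat G lam gam kap p q.
Proof.
move=> Hkb H p q.
rewrite A0E -{1}(card_ord N) -prod_const -big_split /=.
rewrite /Amat; apply: (proj2 (prod_le _ _ _ _)) => i /=.
have Hk := @Rkern_ge0 _ _ _ i (lam i) (p i) (BR G i p) (q i) ltac:(have := Hlam i; lra).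
have Hc := card_pol_gt0 p i.
have He : forall e, 0 <= e <= kb -> 0 <= (1 - kb) * Rkern (lam i) (p i) (BR G i p) (q i) <=
    (1 - e) * Rkern (lam i) (p i) (BR G i p) (q i) + e / INR #|pol X U i|.
  move=> e He'; have : 0 <= e / INR #|pol X U i| by apply: Rle_mult_inv_pos; lra.
  move=> ?; split; nra.
by case: (p \in Popt G); apply: He; case: (H i).
Qed.

Lemma A0_ge0 p q : 0 <= A0 p q.
Proof. by apply: Amat_ge0 => i; lra. Qed.

Lemma A0_sum p : rsum (A0 p) = 1.
Proof. by apply: Amat_sum => i; lra. Qed.

Lemma A0_absorb p : p \in Peq G -> A0 p p = 1.
Proof.
move=> Hp; rewrite A0E big1 // => i _; rewrite /Rkern.
have -> : p i \in BR G i p by move: Hp; rewrite inE => /forallP.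
by rewrite eqxx.
Qed.

Lemma strict_notin p i (s : pol X U i) : strict_br G p s -> p i \notin BR G i p.
Proof.
case/andP => _ /existsP [x Hx]; apply/negP => Hp.
move: Hp; rewrite inE => /forallP /(_ x) /forallP /(_ s); rewrite upd_id.
move: Hx; rewrite /Rleb /Rltb; case: Rle_dec => // H1; case: Rlt_dec => // H2 _ _; lra.
Qed.

Lemma A0_pos p q : sbr_step G p q -> 0 < A0 p q.
Proof.
case/andP => _ /forallP H; rewrite A0E; apply: prod_gt0 => i.
case: (eqVneq (q i) (p i)) => [E | Hne].
  rewrite E /Rkern eqxx; case: (p i \in BR G i p); [lra | have := Hlam i; lra].
move/implyP: (H i) => /(_ Hne) Hs.
rewrite /Rkern (negbTE (strict_notin _ _ _ Hs)) (negbTE Hne).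
have Hb : q i \in BR G i p by case/andP: Hs.
rewrite Hb; have : (0 < #|BR G i p|)%nat by apply/card_gt0P; exists (q i).
move=> /ltP /lt_0_INR Hc; apply: Rlt_mult_inv_pos => //; have := Hlam i; lra.
Qed.

Lemma absorb_iter q : q \in Peq G -> forall k nu, (forall t, 0 <= nu t) -> nu q <= vmulpow nu A0 k q.
Proof.
move=> Hq; elim=> [|k IH] nu Hn //=; first lra.
apply: Rle_trans (IH nu Hn) _.
rewrite /vmul; apply: Rle_trans (rsum_term (fun p => vmulpow nu A0 k p * A0 p q) q _).
  rewrite A0_absorb //; lra.
move=> p; apply: Rmult_le_pos; [exact: (vmulpow_ge0 _ _ Hn A0_ge0) | exact: A0_ge0].
Qed.

Lemma delta_ge0 (p : jpol X U) t : 0 <= delta p t.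
Proof. rewrite /delta; case: (t == p); lra. Qed.

Lemma path_pos p s : path (@sbr_step N X U G) p s -> 0 < vmulpow (delta p) A0 (size s) (last p s).
Proof.
elim/last_ind: s => [|s x IH] /=; first by rewrite /delta eqxx; lra.
rewrite rcons_path => /andP [Hp Hs]; rewrite size_rcons last_rcons /=.
rewrite /vmul; apply: Rlt_le_trans (rsum_term (fun r => vmulpow (delta p) A0 (size s) r * A0 r x) (last p s) _).
  exact: Rmult_lt_0_compat (IH Hp) (A0_pos _ _ Hs).
move=> r; apply: Rmult_le_pos; [exact: (vmulpow_ge0 _ _ (@delta_ge0 p) A0_ge0) | exact: A0_ge0].
Qed.

Hypothesis Hwa : weakly_acyclic G.

Lemma reach_one p : exists L d, 0 < d /\ forall n, (L <= n)%nat -> d <= mass (vmulpow (delta p) A0 n) (Peq G).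
Proof.
have [s /andP [Hs Hq]] := Hwa p.
exists (size s), (vmulpow (delta p) A0 (size s) (last p s)); split; first exact: path_pos.
move=> n Hn; rewrite -(subnK Hn) -vmulpow_add.
have Hnn := vmulpow_ge0 _ _ (@delta_ge0 p) A0_ge0 (size s).
apply: Rle_trans (absorb_iter _ Hq (n - size s) _ Hnn) _.
apply: rsum_in_term => // t; apply: vmulpow_ge0 => //; exact: A0_ge0.
Qed.

Lemma reach_unif : exists L d, 0 < d <= 1/2 /\ forall p n, (L <= n)%nat ->
  d <= mass (vmulpow (delta p) A0 n) (Peq G).
Proof.
suff H : forall s : seq (jpol X U), exists L d, 0 < d <= 1/2 /\ forall p, p \in s -> forall n, (L <= n)%nat ->
  d <= mass (vmulpow (delta p) A0 n) (Peq G).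
  have [L [d [Hd HL]]] := H (enum (jpol X U)).
  exists L, d; split => // p n Hn; apply: HL => //; by rewrite mem_enum.
elim=> [|a s [L [d [Hd HL]]]]; first by exists 0%nat, (1/2); split; [lra|].
have [La [da [Hda HLa]]] := reach_one a.
exists (maxn L La), (Rmin d da); split.
  split; [apply: Rmin_pos; lra | apply: Rle_trans (Rmin_l _ _) _; lra].
move=> p; rewrite inE => /orP [/eqP -> | Hp] n Hn.
  apply: Rle_trans (Rmin_r _ _) _; apply: HLa; apply: leq_trans Hn; exact: leq_maxr.
apply: Rle_trans (Rmin_l _ _) _; apply: HL => //; apply: leq_trans Hn; exact: leq_maxl.
Qed.

End Chain.

Lemma bernoulli x n : 0 <= x <= 1 -> 1 - INR n * x <= (1 - x) ^ n.
Proof.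
move=> Hx; elim: n => [|n IH]; first (simpl; lra).
rewrite S_INR /=.
have h : 0 <= (1 - x) ^ n by apply: pow_le; lra.
have h2 := pos_INR n.
have h3 : (1 - x) * (1 - INR n * x) <= (1 - x) * (1 - x) ^ n by apply: Rmult_le_compat_l; lra.
have h4 : 0 <= INR n * (x * x) by apply: Rmult_le_pos; nra.
nra.
Qed.

Section Contr.
Variables (N : nat) (X : finType) (U : 'I_N -> finType) (G : game N X U).
Hypothesis HG : game_ok G.
Variable lam : 'I_N -> R.
Hypothesis Hlam : forall i, 0 < lam i < 1.
Let AA := @A0 N X U G lam.
Variables (L : nat) (d : R).
Hypothesis Hd : 0 < d <= 1/2.
Hypothesis HL : forall p n, (L <= n)%nat -> d <= mass (vmulpow (delta p) AA n) (Peq G).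

Definition out (nu : jpol X U -> R) := rsum_in (~: Peq G) nu.

Lemma AA_ge0 p q : 0 <= AA p q.
Proof. exact: A0_ge0. Qed.

Lemma AA_sum p : rsum (AA p) = 1.
Proof. exact: A0_sum. Qed.

Lemma mass_lin (nu : jpol X U -> R) m (S : {set jpol X U}) :
  mass (vmulpow nu AA m) S = rsum (fun p => nu p * mass (vmulpow (delta p) AA m) S).
Proof.
rewrite /mass /rsum_in (eq_bigr (fun q => rsum (fun p => nu p * vmulpow (delta p) AA m q))); last first.
  by move=> q _; rewrite vmulpow_lin.
rewrite /rsum exchange_big; apply: eq_bigr => p _; by rewrite big_distrr.
Qed.

Lemma contract nu : (forall t, 0 <= nu t) -> out (vmulpow nu AA L) <= (1 - d) * out nu.
Proof.
move=> Hn.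
have Hsum := vmulpow_sum nu AA AA_sum L.
rewrite (rsum_split (Peq G)) [rsum nu](rsum_split (Peq G)) in Hsum.
have Hm : rsum_in (Peq G) nu + d * out nu <= mass (vmulpow nu AA L) (Peq G).
  rewrite mass_lin (rsum_split (Peq G)).
  apply: Rplus_le_compat.
    apply: rsum_in_le_on => p Hp.
    have : 1 <= mass (vmulpow (delta p) AA L) (Peq G).
      apply: Rle_trans (@rsum_in_term _ (Peq G) _ p _ Hp).
        have := @absorb_iter _ _ _ G lam Hlam p Hp L (delta p) (@delta_ge0 _ _ _ p); rewrite /delta eqxx; exact.
      by move=> t; apply: vmulpow_ge0 => //; [exact: delta_ge0 | exact: AA_ge0].
    have := Hn p; nra.
  rewrite /out -rsum_in_scal; apply: rsum_in_le_on => p _.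
  have := HL p L (leqnn L); have := Hn p; nra.
rewrite /mass /out in Hm; rewrite /out; lra.
Qed.

Lemma out_ge0 nu : (forall t, 0 <= nu t) -> 0 <= out nu.
Proof. by move=> H; apply: rsum_in_ge0. Qed.

Lemma contract_iter k nu : (forall t, 0 <= nu t) -> out (vmulpow nu AA (k * L)) <= (1 - d) ^ k * out nu.
Proof.
move=> Hn; elim: k => [|k IH].
  rewrite mul0n /=; lra.
rewrite mulSn -vmulpow_add.
apply: Rle_trans (contract _ _) _.
  by apply: vmulpow_ge0 => //; exact: AA_ge0.
rewrite /=; have : 0 <= 1 - d by lra.
move=> h; rewrite Rmult_assoc; apply: Rmult_le_compat_l => //.
Qed.

Lemma mass_bound k nu : is_distr nu -> 1 - (1 - d) ^ k <= mass (vmulpow nu AA (k * L)) (Peq G).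
Proof.
move=> [Hn H1].
have := contract_iter k nu Hn.
have Hsum := vmulpow_sum nu AA AA_sum (k * L).
rewrite (rsum_split (Peq G)) H1 in Hsum.
have Hs1 := rsum_split (Peq G) nu; rewrite H1 in Hs1.
have := rsum_in_ge0 (Peq G) nu Hn.
have : 0 <= (1 - d) ^ k by apply: pow_le; lra.
rewrite /out /mass; move=> h1 h2 h3.
have : (1 - d) ^ k * rsum_in (~: Peq G) nu <= (1 - d) ^ k * 1.
  apply: Rmult_le_compat_l => //; lra.
lra.
Qed.

End Contr.

Theorem lemma3 (N : nat) (X : finType) (U : 'I_N -> finType) (G : game N X U)
  (HG : game_ok G) (Hwa : weakly_acyclic G)
  (lam : 'I_N -> R) (Hlam : forall i, 0 < lam i < 1)
  (eps : R) (Heps : 0 < eps) :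
  exists kbar : R, 0 < kbar < 1 /\
    (forall gam kap : 'I_N -> R,
       (forall i, 0 < gam i /\ 0 < kap i /\ Rmax (gam i) (kap i) < kbar) ->
       forall mu : jpol X U -> R, stationary (Amat G lam gam kap) mu ->
         mass mu (Peq G) >= 1 - eps / 4) /\
    (exists mbar : nat,
       forall gam kap : 'I_N -> R,
       (forall i, 0 < gam i /\ 0 < kap i /\ Rmax (gam i) (kap i) < kbar) ->
       forall (m : nat) (mu0 : jpol X U -> R), (mbar <= m)%nat -> is_distr mu0 ->
         mass (vmulpow mu0 (Amat G lam gam kap) m) (Peq G) >= 1 - eps / 2).
Proof.
have [L [d [Hd HL]]] := @reach_unif _ _ _ G lam Hlam Hwa.
pose t := Rmin (eps / 8) (1 / 2).
have Ht : 0 < t <= 1 / 2 /\ t <= eps / 8.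
  split; [split; [apply: Rmin_pos; lra | exact: Rmin_r] | exact: Rmin_l].
have [K HK] := pow_lt_1_zero (1 - d) ltac:(rewrite Rabs_pos_eq; lra) t ltac:(lra).
have HK' : (1 - d) ^ K < t.
  have := HK K (le_n K); have := Rle_abs ((1 - d) ^ K); lra.
pose M := (K * L)%nat.
have Hmb : forall nu, is_distr nu -> 1 - t <= mass (vmulpow nu (A0 N X U G lam) M) (Peq G).
  move=> nu Hnu; rewrite /M; have := @mass_bound _ _ _ G HG lam Hlam L d Hd HL K nu Hnu; lra.
pose n := (N * M)%nat.
have Hn0 := pos_INR n.
pose kbar := Rmin (1 / 2) (t / (INR n + 1)).
have Hq : 0 < t / (INR n + 1) by apply: Rdiv_lt_0_compat; lra.
have Hkb : 0 < kbar <= 1 / 2 by split; [apply: Rmin_pos; lra | exact: Rmin_l].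
have Hnk : INR n * kbar <= t.
  have h1 : kbar <= t / (INR n + 1) by exact: Rmin_r.
  have h2 : (INR n + 1) * (t / (INR n + 1)) = t by field; lra.
  have h3 : INR n * kbar <= INR n * (t / (INR n + 1)) by apply: Rmult_le_compat_l.
  nra.
have KEY : forall gam kap : 'I_N -> R,
    (forall i, 0 < gam i /\ 0 < kap i /\ Rmax (gam i) (kap i) < kbar) ->
    forall nu, is_distr nu -> 1 - eps / 4 <= mass (vmulpow nu (Amat G lam gam kap) M) (Peq G).
  move=> gam kap Hgk nu [Hnn Hns].
  have He : forall i, 0 <= gam i <= kbar /\ 0 <= kap i <= kbar.
    move=> i; have [h1 [h2 h3]] := Hgk i.
    have := Rmax_l (gam i) (kap i); have := Rmax_r (gam i) (kap i); lra.
  have Hc : 0 <= (1 - kbar) ^ N by apply: pow_le; lra.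
  have Hcmp := vmulpow_cmp nu _ _ _ Hc Hnn (@A0_ge0 _ _ _ G lam Hlam)
     (@Amat_ge_A0 _ _ _ G lam Hlam gam kap kbar ltac:(lra) He) M.
  have Hm1 : ((1 - kbar) ^ N) ^ M * mass (vmulpow nu (A0 N X U G lam) M) (Peq G)
      <= mass (vmulpow nu (Amat G lam gam kap) M) (Peq G).
    by rewrite /mass -rsum_in_scal; apply: rsum_in_le => q; exact: Hcmp.
  have Hpow : ((1 - kbar) ^ N) ^ M = (1 - kbar) ^ n by rewrite -pow_mult /n mulnE.
  have Hb := bernoulli kbar n ltac:(lra) : 1 - INR n * kbar <= (1 - kbar) ^ n.
  have := Hmb nu (conj Hnn Hns).
  rewrite Hpow in Hm1.
  move=> h.
  have : (1 - t) * (1 - t) <= (1 - kbar) ^ n * mass (vmulpow nu (A0 N X U G lam) M) (Peq G).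
    apply: Rmult_le_compat; lra.
  nra.
exists kbar; split; first lra.
split.
  move=> gam kap Hgk mu [Hd0 Hst].
  have := KEY gam kap Hgk mu Hd0.
  rewrite (vmulpow_stat _ _ Hst M) => h; apply: Rle_ge; exact: h.
exists M => gam kap Hgk m mu0 Hm [Hn Hs].
have Hok : okE N gam kap.
  move=> i; have [h1 [h2 h3]] := Hgk i.
  have := Rmax_l (gam i) (kap i); have := Rmax_r (gam i) (kap i); lra.
rewrite -(subnKC Hm) -vmulpow_add.
have Hnu : is_distr (vmulpow mu0 (Amat G lam gam kap) (m - M)).
  split.
    move=> q; apply: vmulpow_ge0 => //; exact: (@Amat_ge0 _ _ _ G lam Hlam gam kap Hok).
  rewrite vmulpow_sum //; exact: (@Amat_sum _ _ _ G HG lam gam kap Hok).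
have := KEY gam kap Hgk _ Hnu; lra.
Qed.
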